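(* Let $\mathscr{F}(r)=\int_0^1 t^{r-1/2}\sqrt{1+t}\,\arcsin t\,\mathrm{d}t$ for nonnegative integers $r$. Then $$\mathscr{F}(0)=\int_0^1\frac{\sqrt{1+t}}{\sqrt t}\arcsin t\,\mathrm{d}t=\frac{\pi}{2}\left(\sqrt{2}-1+\ln \left(\sqrt{2}+1\right)-\ln 2\right).$$ *)

(* Defs.v *)
From Stdlib Require Import Reals.
From Coquelicot Require Import Coquelicot.
Open Scope R_scope.

(* Integrand of F(r): t^(r-1/2) * sqrt(1+t) * arcsin t.  The real power
   t^(r-1/2) is Rpower t (INR r - 1/2); its value at the single point t = 0
   is irrelevant for the (Riemann) integral. *)
Definition F_integrand (r : nat) (t : R) : R :=
  Rpower t (INR r - 1/2) * sqrt (1 + t) * asin t.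

Definition F (r : nat) : R := RInt (F_integrand r) 0 1.

(* Main.v *)
Require Import Defs.
From Stdlib Require Import Reals.
From Coquelicot Require Import Coquelicot.
From Stdlib Require Import Lra.
Open Scope R_scope.

Lemma FTC_int (G g : R -> R) (a b : R) :
  a < b -> (forall x, continuous g x) ->
  (forall x, a <= x <= b -> continuous G x) ->
  (forall x, a < x < b -> is_derive G x (g x)) ->
  is_RInt g a b (G b - G a).
Proof.
  intros Hab Hg HG Hd.
  set (P := fun x => RInt g a x).
  assert (HP : forall x, is_derive P x (g x)).
  { intro x. apply is_derive_RInt with a.
    - apply filter_forall. intro y. apply RInt_correct.
      apply ex_RInt_continuous. intros; auto.
    - auto. }
  destruct (MVT_gen (fun x => G x - P x) a b (fun _ => 0)) as [c [_ Hc]].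
  - rewrite Rmin_left, Rmax_right by lra. intros x Hx.
    replace 0 with (g x - g x) by ring.
    apply (is_derive_minus G P). apply Hd; lra. apply HP.
  - rewrite Rmin_left, Rmax_right by lra. intros x Hx.
    apply continuity_pt_filterlim.
    apply (continuous_minus G P). apply HG; lra.
    apply ex_derive_continuous. eexists; apply HP.
  - assert (E : G b - G a = P b).
    { assert (P a = 0) by (unfold P; rewrite RInt_point; reflexivity). lra. }
    rewrite E. unfold P. apply (RInt_correct g a b). apply ex_RInt_continuous. intros; auto.
Qed.

Lemma is_derive_asin x : -1 < x < 1 -> is_derive asin x (1 / sqrt (1 - x²)).
Proof.
  intro H. apply is_derive_Reals. apply derive_pt_eq_1 with (derivable_pt_asin x H).
  apply derive_pt_asin.
Qed.

Lemma asin_ge1 x : 1 <= x -> asin x = PI / 2.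
Proof. intro H. unfold asin. destruct (Rle_dec x (-1)); [lra|]. destruct (Rle_dec 1 x); lra. Qed.

Lemma asin_cont1 : continuity_pt asin 1.
Proof.
  unfold continuity_pt, continue_in, limit1_in, limit_in. intros eps Heps.
  set (e := Rmin eps (PI/2) / 2).
  assert (He : 0 < e /\ e < eps /\ e < PI/2).
  { unfold e. pose proof PI_RGT_0. pose proof (Rmin_l eps (PI/2)). pose proof (Rmin_r eps (PI/2)). pose proof (Rmin_glb_lt eps (PI/2) 0). lra. }
  assert (Hc : cos e < 1).
  { rewrite <- cos_0. apply cos_decreasing_1; lra. }
  exists (1 - cos e). split; [lra|].
  intros x [_ Hx]. simpl in *. unfold R_dist in *. rewrite asin_1.
  destruct (Rle_dec 1 x) as [H1|H1].
  - rewrite asin_ge1 by lra. rewrite Rminus_diag, Rabs_R0; lra.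
  - assert (Hx1 : cos e < x) by (apply Rabs_def2 in Hx; lra).
    assert (Hce : 0 < cos e) by (apply cos_gt_0; lra).
    assert (Hb := asin_bound x).
    assert (PI/2 - e <= asin x).
    { apply sin_incr_0; try lra. rewrite sin_shift, sin_asin by lra. lra. }
    rewrite Rabs_left1 by lra. lra.
Qed.

Lemma asin_cont x : -1 <= x <= 1 -> continuous asin x.
Proof.
  intro H. apply continuity_pt_filterlim.
  destruct (Req_dec x 1) as [->|H1]; [apply asin_cont1|].
  destruct (Req_dec x (-1)) as [->|H2].
  - assert (E : forall y, - asin (- y) = asin y) by (intro y; rewrite asin_opp; ring).
    apply (continuity_pt_ext (- (comp asin Ropp))%F); [intro y; unfold comp; simpl; apply E|].
    apply continuity_pt_opp, continuity_pt_comp.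
    + apply continuity_pt_opp, continuity_pt_id.
    + replace (- -1) with 1 by ring. apply asin_cont1.
  - apply derivable_continuous_pt, derivable_pt_asin. lra.
Qed.

Lemma asin_small t : 0 <= t <= 1/2 -> 0 <= asin t <= 2 * t.
Proof.
  intro H. destruct (Req_dec t 0) as [->|Ht]; [rewrite asin_0; lra|].
  destruct (MVT_gen asin 0 t (fun x => 1 / sqrt (1 - x²))) as [c [Hc E]].
  - rewrite Rmin_left, Rmax_right by lra. intros x Hx. apply is_derive_asin. lra.
  - rewrite Rmin_left, Rmax_right by lra. intros x Hx.
    apply continuity_pt_filterlim, asin_cont. lra.
  - rewrite Rmin_left, Rmax_right in Hc by lra. rewrite asin_0 in E.
    assert (Hs : 1/2 <= sqrt (1 - c²)).
    { rewrite <- (sqrt_square (1/2)) by lra. apply sqrt_le_1_alt. unfold Rsqr. nra. }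
    assert (0 < sqrt (1 - c²)) by lra.
    assert (1 / sqrt (1 - c²) <= 2).
    { apply Rmult_le_reg_r with (sqrt (1 - c²)); auto. field_simplify; lra. }
    assert (0 <= 1 / sqrt (1 - c²)) by (apply Rlt_le, Rdiv_lt_0_compat; lra).
    split; nra.
Qed.

Lemma cont_mult (f g : R -> R) (x : R) : continuous f x -> continuous g x -> continuous (fun y => f y * g y) x.
Proof. intros Hf Hg. apply continuity_pt_filterlim. apply (continuity_pt_mult f g x);
  apply continuity_pt_filterlim; auto. Qed.
Lemma cont_plus (f g : R -> R) (x : R) : continuous f x -> continuous g x -> continuous (fun y => f y + g y) x.
Proof. intros Hf Hg. apply continuity_pt_filterlim. apply (continuity_pt_plus f g x);
  apply continuity_pt_filterlim; auto. Qed.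
Lemma cont_comp (f g : R -> R) (x : R) : continuous f x -> continuous g (f x) -> continuous (fun y => g (f y)) x.
Proof. intros Hf Hg. apply continuity_pt_filterlim. apply (continuity_pt_comp f g x);
  apply continuity_pt_filterlim; auto. Qed.

Lemma fpos t : 0 < t -> F_integrand 0 t = sqrt (1+t) * asin t / sqrt t.
Proof.
  intro H. unfold F_integrand. simpl INR. replace (0 - 1/2) with (- (/2)) by field.
  rewrite Rpower_Ropp, Rpower_sqrt by auto. field. apply Rgt_not_eq, sqrt_lt_R0; auto.
Qed.

Lemma fneg t : t <= 0 -> F_integrand 0 t = sqrt (1+t) * asin t.
Proof.
  intro H. unfold F_integrand, Rpower. replace (ln t) with 0.
  rewrite Rmult_0_r, exp_0, Rmult_1_l; reflexivity. unfold ln. destruct (Rlt_dec 0 t); [exfalso; lra|reflexivity].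
Qed.

Lemma f_cont0 : continuous (F_integrand 0) 0.
Proof.
  apply continuity_pt_filterlim.
  unfold continuity_pt, continue_in, limit1_in, limit_in. intros eps Heps.
  exists (Rmin (1/2) (Rmin (eps/2) (eps*eps/16))).
  split. { repeat apply Rmin_pos; nra. }
  intros t [_ Ht]. simpl in *. unfold R_dist in *. rewrite Rminus_0_r in Ht.
  assert (Ht1 : Rabs t < 1/2) by (eapply Rlt_le_trans; [exact Ht| apply Rmin_l]).
  assert (Ht2 : Rabs t < eps/2) by (eapply Rlt_le_trans; [exact Ht|]; eapply Rle_trans; [apply Rmin_r|apply Rmin_l]).
  assert (Ht3 : Rabs t < eps*eps/16) by (eapply Rlt_le_trans; [exact Ht|]; eapply Rle_trans; [apply Rmin_r|apply Rmin_r]).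
  rewrite (fneg 0) by lra. rewrite asin_0, Rmult_0_r, Rminus_0_r.
  destruct (Rlt_le_dec 0 t) as [Hp|Hn].
  - rewrite fpos by auto. rewrite Rabs_pos_eq in Ht1, Ht2, Ht3 by lra.
    destruct (asin_small t) as [A1 A2]; [lra|].
    assert (S1 : sqrt (1+t) <= 2).
    { rewrite <- (sqrt_square 2) by lra. apply sqrt_le_1_alt. lra. }
    assert (S0 : 0 <= sqrt (1+t)) by apply sqrt_pos.
    assert (St : 0 < sqrt t) by (apply sqrt_lt_R0; auto).
    assert (St2 : sqrt t * sqrt t = t) by (apply sqrt_sqrt; lra).
    assert (St3 : sqrt t < eps / 4).
    { rewrite <- (sqrt_square (eps/4)) by lra. apply sqrt_lt_1_alt. lra. }
    rewrite Rabs_pos_eq.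
    + apply Rmult_lt_reg_r with (sqrt t); auto. field_simplify; [|lra]. nra.
    + apply Rmult_le_pos; [apply Rmult_le_pos; auto| apply Rlt_le, Rinv_0_lt_compat; auto].
  - rewrite fneg by auto. rewrite Rabs_left1 in Ht1, Ht2 by lra.
    destruct (asin_small (-t)) as [A1 A2]; [lra|]. rewrite asin_opp in A1, A2.
    assert (S1 : sqrt (1+t) <= 1).
    { pose proof (sqrt_le_1_alt (1+t) 1) as Hq. rewrite sqrt_1 in Hq. apply Hq; lra. }
    assert (S0 : 0 <= sqrt (1+t)) by apply sqrt_pos.
    assert (sqrt (1+t) * (- asin t) <= 1 * (-asin t)) by (apply Rmult_le_compat_r; lra).
    rewrite Rabs_left1 by nra. lra.
Qed.

Lemma f_cont t : 0 <= t <= 1 -> continuous (F_integrand 0) t.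
Proof.
  intro H. destruct (Req_dec t 0) as [->|H0]; [apply f_cont0|].
  unfold F_integrand. apply cont_mult; [apply cont_mult|].
  - apply (ex_derive_continuous (fun y => Rpower y (INR 0 - 1/2))). unfold Rpower. auto_derive. lra.
  - apply (ex_derive_continuous (fun y => sqrt (1 + y))). auto_derive. lra.
  - apply asin_cont. lra.
Qed.

Definition ash (x : R) := ln (x + sqrt (1 + x * x)).

Lemma ash_pos x : 0 < x + sqrt (1 + x * x).
Proof.
  assert (H : Rabs x < sqrt (1 + x * x)).
  { rewrite <- sqrt_Rsqr_abs. apply sqrt_lt_1_alt. split; [apply Rle_0_sqr|]. unfold Rsqr; lra. }
  destruct (Rabs_def2 x _ H) as [H1 H2]. lra.
Qed.

Lemma is_derive_ash x : is_derive ash x (/ sqrt (1 + x * x)).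
Proof.
  unfold ash. auto_derive.
  - repeat split; auto. nra. apply ash_pos.
  - assert (Hp := ash_pos x). assert (Hr : 0 < sqrt (1 + x * x)) by (apply sqrt_lt_R0; nra).
    field. lra.
Qed.

Definition sq (x : R) := sqrt (1 + x * x).
Lemma sq_pos x : 0 < sq x.
Proof. unfold sq. apply sqrt_lt_R0. nra. Qed.
Lemma sq_sq x : sq x * sq x = 1 + x * x.
Proof. unfold sq. apply sqrt_sqrt. nra. Qed.
Lemma is_derive_sq x : is_derive sq x (x / sq x).
Proof. unfold sq. auto_derive. nra. assert (H := sq_pos x). unfold sq in H. field. lra. Qed.

Definition h (x : R) := x * ash x / sq x.
Definition hd (x : R) := ash x / (sq x * sq x * sq x) + x / (sq x * sq x).

Lemma is_derive_h x : is_derive h x (hd x).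
Proof.
  unfold h. auto_derive.
  - repeat split. eexists; apply is_derive_ash. eexists; apply is_derive_sq.
    apply Rgt_not_eq, sq_pos.
  - replace (Derive (fun x0 => ash x0) x) with (/ sq x) by (symmetry; apply is_derive_unique; apply is_derive_ash).
    replace (Derive (fun x0 => sq x0) x) with (x / sq x) by (symmetry; apply is_derive_unique; apply is_derive_sq).
    assert (Hp : sq x <> 0) by (apply Rgt_not_eq, sq_pos). unfold hd.
    replace (ash x / (sq x * sq x * sq x)) with (ash x * (sq x * sq x - x * x) / (sq x * sq x * sq x))
      by (assert (1 + x * x <> 0) by nra; rewrite sq_sq; field; auto).
    field. auto.
Qed.

Definition dm (b p : R) := cos p * hd (b * cos p).
Definition Q (b p : R) := ash (b * cos p) * sin p / ((1 + b * b) * sq (b * cos p)).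

Lemma is_derive_m b p : is_derive (fun b => h (b * cos p)) b (dm b p).
Proof.
  unfold dm. apply (is_derive_ext (fun b => h (b * cos p))); [reflexivity|].
  replace (cos p * hd (b * cos p)) with (scal (cos p) (hd (b * cos p))) by reflexivity.
  apply (is_derive_comp h (fun b => b * cos p)). apply is_derive_h.
  auto_derive. auto. ring.
Qed.

Lemma is_derive_Qp b p : is_derive (fun p => p * (b / (1 + b * b)) + Q b p) p (dm b p).
Proof.
  unfold Q. auto_derive.
  - repeat split. eexists; apply is_derive_ash. eexists; apply is_derive_sq.
    apply Rgt_not_eq. apply Rmult_lt_0_compat. nra. apply sq_pos.
  - replace (Derive (fun x0 => ash x0) (b * cos p)) with (/ sq (b * cos p)) by (symmetry; apply is_derive_unique; apply is_derive_ash).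
    replace (Derive (fun x0 => sq x0) (b * cos p)) with (b * cos p / sq (b * cos p)) by (symmetry; apply is_derive_unique; apply is_derive_sq).
    unfold dm, hd.
    assert (E1 := sq_sq (b * cos p)). assert (E2 := sin2_cos2 p). unfold Rsqr in E2.
    assert (Hr := sq_pos (b * cos p)).
    set (r := sq (b * cos p)) in *. set (L := ash (b * cos p)) in *.
    set (c := cos p) in *. set (s := sin p) in *.
    assert (Hk : 1 + b * b <> 0) by nra. assert (Hr0 : r <> 0) by lra.
    apply Rminus_diag_uniq.
    transitivity ((c*L*((r*r - 1 - b*c*(b*c)) + b*b*(s*s+c*c-1)) + b*r*((r*r - 1 - b*c*(b*c)) - (s*s+c*c-1)))/((1+b*b)*(r*r*r))).
    + field. auto.
    + replace (r*r - 1 - b*c*(b*c)) with 0 by lra. replace (s*s+c*c-1) with 0 by lra.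
      field. auto.
Qed.




Lemma cont_inv (f : R -> R) (x : R) : continuous f x -> f x <> 0 -> continuous (fun y => / f y) x.
Proof. intros Hf H. apply continuity_pt_filterlim. apply (continuity_pt_inv f x);
  [apply continuity_pt_filterlim|]; auto. Qed.
Lemma cont_div (f g : R -> R) (x : R) : continuous f x -> continuous g x -> g x <> 0 -> continuous (fun y => f y / g y) x.
Proof. intros. apply (cont_mult f (fun y => / g y)); auto. apply cont_inv; auto. Qed.

Lemma cont_ash x : continuous ash x.
Proof. apply (ex_derive_continuous ash). eexists; apply is_derive_ash. Qed.
Lemma cont_sq x : continuous sq x.
Proof. apply (ex_derive_continuous sq). eexists; apply is_derive_sq. Qed.
Lemma cont_id x : continuous (fun y : R => y) x.
Proof. apply continuous_id. Qed.

Lemma cont_hd x : continuous hd x.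
Proof.
  assert (Hn : forall y, sq y <> 0) by (intro; apply Rgt_not_eq, sq_pos).
  unfold hd. apply cont_plus; apply cont_div; auto using cont_ash, cont_id;
  try (apply Rmult_integral_contrapositive; split; auto; apply Rmult_integral_contrapositive; split; auto);
  repeat apply cont_mult; auto using cont_sq.
Qed.

Lemma cont_h x : continuous h x.
Proof.
  unfold h. apply cont_div; [apply cont_mult| |]; auto using cont_id, cont_ash, cont_sq.
  apply Rgt_not_eq, sq_pos.
Qed.

Lemma cont_cos x : continuous cos x.
Proof. apply continuity_pt_filterlim, continuity_cos. Qed.
Lemma cont_sin x : continuous sin x.
Proof. apply continuity_pt_filterlim, continuity_sin. Qed.

Lemma cont_dm b p : continuous (dm b) p.
Proof.
  unfold dm. apply cont_mult. apply cont_cos.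
  apply (cont_comp (fun p => b * cos p) hd). apply cont_mult. apply continuous_const. apply cont_cos.
  apply cont_hd.
Qed.

Lemma ash0 : ash 0 = 0.
Proof. unfold ash. rewrite Rmult_0_r, Rplus_0_r, sqrt_1, Rplus_0_l. apply ln_1. Qed.

Lemma int_dm b : is_RInt (dm b) 0 (PI/2) ((PI/2) * (b/(1+b*b))).
Proof.
  assert (H := is_RInt_derive (fun p => p * (b / (1 + b * b)) + Q b p) (dm b) 0 (PI/2)).
  replace ((PI/2) * (b/(1+b*b))) with (minus ((PI/2) * (b / (1 + b * b)) + Q b (PI/2)) (0 * (b / (1 + b * b)) + Q b 0)).
  apply H. intros; apply is_derive_Qp. intros; apply cont_dm.
  unfold Q. rewrite cos_PI2, sin_0, Rmult_0_r, ash0. unfold minus, plus, opp; simpl. field.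
  repeat split; try (apply Rgt_not_eq, sq_pos); nra.
Qed.

Definition Mb b := RInt (fun p => h (b * cos p)) 0 (PI/2).

Lemma cont2_dm x y : continuity_2d_pt dm x y.
Proof.
  unfold dm.
  apply (continuity_2d_pt_mult (fun u v => cos v) (fun u v => hd (u * cos v))).
  - apply (continuity_1d_2d_pt_comp cos (fun u v => v)). apply continuity_cos. apply continuity_2d_pt_id2.
  - apply (continuity_1d_2d_pt_comp hd (fun u v => u * cos v)).
    apply continuity_pt_filterlim, cont_hd.
    apply (continuity_2d_pt_mult (fun u v => u) (fun u v => cos v)). apply continuity_2d_pt_id1.
    apply (continuity_1d_2d_pt_comp cos (fun u v => v)). apply continuity_cos. apply continuity_2d_pt_id2.
Qed.

Lemma der_Mb b : is_derive Mb b ((PI/2) * (b/(1+b*b))).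
Proof.
  assert (H := is_derive_RInt_param (fun u t => h (u * cos t)) 0 (PI/2) b).
  replace ((PI/2) * (b/(1+b*b))) with (RInt (fun t => Derive (fun u => h (u * cos t)) b) 0 (PI/2)).
  apply H.
  - apply filter_forall. intros x t _. eexists. apply is_derive_m.
  - intros t _. apply continuity_2d_pt_ext with (fun u v => dm u v).
    intros; symmetry; apply is_derive_unique, is_derive_m. apply cont2_dm.
  - apply filter_forall. intros y. apply (@ex_RInt_continuous R_CompleteNormedModule (fun t => h (y * cos t))). intros z _.
    apply (cont_comp (fun p => y * cos p) h). apply cont_mult. apply continuous_const. apply cont_cos.
    apply cont_h.
  - rewrite (RInt_ext _ (dm b)). apply is_RInt_unique, int_dm.
    intros x _. apply is_derive_unique, is_derive_m.
Qed.

Lemma Mb1 : Mb 1 = PI / 4 * ln 2.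
Proof.
  assert (HD : forall t, 0 <= t <= 1 -> is_derive (fun b => Mb b - PI / 4 * ln (1 + b * b)) t zero).
  { intros t _. replace (@zero R_NormedModule) with ((PI/2) * (t/(1+t*t)) - PI/4 * (2 * t / (1 + t * t))).
    apply (is_derive_minus Mb). apply der_Mb. auto_derive. nra. field. nra.
    change (@zero R_NormedModule) with 0. field. nra. }
  assert (E := eq_is_derive (fun b => Mb b - PI / 4 * ln (1 + b * b)) 0 1 HD).
  assert (E0 : Mb 0 = 0).
  { unfold Mb. rewrite (RInt_ext _ (fun _ => 0)). rewrite RInt_const. apply (@scal_zero_r R_AbsRing R_NormedModule).
    intros x _. unfold h. rewrite !Rmult_0_l. unfold Rdiv. rewrite Rmult_0_l. reflexivity. }
  cbv beta in E. rewrite E0 in E. rewrite Rmult_0_r, Rplus_0_r, ln_1 in E.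
  replace (1 + 1 * 1) with 2 in E by ring.
  assert (0 - PI / 4 * 0 = Mb 1 - PI / 4 * ln 2) by (apply E; lra).
  lra.
Qed.

Definition m1 (p : R) := h (1 * cos p).
Definition Mint (x : R) := RInt m1 0 x.
Definition u (p : R) := 2 * sin p * sq (cos p) * asin (cos p * cos p).
Definition Vf (p : R) := cos p * sq (cos p) + ash (cos p).
Definition Af (p : R) := asin (cos p * cos p).
Definition Ef (p : R) := - (Vf p * Af p) - (p + sin p * cos p) - 2 * Mint p.

Lemma cont_m1 x : continuous m1 x.
Proof.
  unfold m1. apply (cont_comp (fun p => 1 * cos p) h). apply cont_mult. apply continuous_const. apply cont_cos.
  apply cont_h.
Qed.

Lemma is_derive_Mint x : is_derive Mint x (m1 x).
Proof.
  apply is_derive_RInt with 0.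
  - apply filter_forall. intro y. apply (RInt_correct m1 0 y).
    apply (@ex_RInt_continuous R_CompleteNormedModule m1). intros; apply cont_m1.
  - apply cont_m1.
Qed.

Lemma is_derive_Ef x : 0 < x < PI/2 -> is_derive Ef x (u x).
Proof.
  intro Hx.
  assert (Hc : 0 < cos x) by (apply cos_gt_0; lra).
  assert (Hs : 0 < sin x) by (apply sin_gt_0; lra).
  assert (E2 := sin2_cos2 x). unfold Rsqr in E2.
  assert (Hcc : cos x * cos x < 1) by nra.
  assert (Hcc' : -1 < cos x * cos x < 1) by (split; nra).
  unfold Ef, Vf, Af. auto_derive.
  - split. eexists; apply is_derive_sq. split. eexists; apply is_derive_ash.
    split. eexists; apply is_derive_asin; exact Hcc'. split. eexists; apply is_derive_Mint. exact I.
  - replace (Derive (fun x0 => ash x0) (cos x)) with (/ sq (cos x)) by (symmetry; apply is_derive_unique; apply is_derive_ash).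
    replace (Derive (fun x0 => sq x0) (cos x)) with (cos x / sq (cos x)) by (symmetry; apply is_derive_unique; apply is_derive_sq).
    replace (Derive (fun x0 => Mint x0) x) with (m1 x) by (symmetry; apply is_derive_unique; apply is_derive_Mint).
    replace (Derive (fun x0 => asin x0) (cos x * cos x)) with (1 / sqrt (1 - (cos x * cos x)²)) by (symmetry; apply is_derive_unique; apply is_derive_asin; exact Hcc').
    assert (E1 := sq_sq (cos x)). assert (Hr := sq_pos (cos x)).
    assert (Hsr : 0 <= sin x * sq (cos x)) by (apply Rmult_le_pos; lra).
    replace (sqrt (1 - (cos x * cos x)²)) with (sin x * sq (cos x)).
    2: { rewrite <- (sqrt_square (sin x * sq (cos x))) by exact Hsr. f_equal. unfold Rsqr.
         transitivity ((sin x * sin x) * (sq (cos x) * sq (cos x))). ring. rewrite E1.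
         replace (sin x * sin x) with (1 - cos x * cos x) by lra. ring. }
    unfold u, m1, h. rewrite !Rmult_1_l.
    set (r := sq (cos x)) in *. set (L := ash (cos x)) in *. set (A := asin (cos x * cos x)) in *.
    set (c := cos x) in *. set (s := sin x) in *.
    assert (Hr0 : r <> 0) by lra. assert (Hs0 : s <> 0) by lra.
    apply Rminus_diag_uniq.
    transitivity (- A * s * (r * r - 1 - c * c) / r + (s * s + c * c - 1)).
    + match goal with |- ?a = ?b => change (@eq R a b) end. field. auto.
    + replace (r * r - 1 - c * c) with 0 by lra. replace (s * s + c * c - 1) with 0 by lra.
      field. auto.
Qed.

Lemma cont_ccos x : continuous (fun p => cos p * cos p) x.
Proof. apply cont_mult; apply cont_cos. Qed.

Lemma cont_Af x : continuous Af x.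
Proof.
  unfold Af. apply (cont_comp (fun p => cos p * cos p) asin). apply cont_ccos.
  apply asin_cont. pose proof (COS_bound x). split; nra.
Qed.

Lemma cont_u x : continuous u x.
Proof.
  unfold u. apply cont_mult; [apply cont_mult; [apply cont_mult|]|].
  apply continuous_const. apply cont_sin.
  apply (cont_comp cos sq). apply cont_cos. apply cont_sq.
  apply cont_Af.
Qed.

Lemma cont_opp x : continuous Ropp x.
Proof. apply continuity_pt_filterlim. apply (continuity_pt_opp id x), continuity_pt_id. Qed.

Lemma cont_Ef x : continuous Ef x.
Proof.
  unfold Ef.
  apply (cont_plus (fun p => - (Vf p * Af p) - (p + sin p * cos p)) (fun p => - (2 * Mint p))).
  apply (cont_plus (fun p => - (Vf p * Af p)) (fun p => - (p + sin p * cos p))).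
  - apply (cont_comp (fun p => Vf p * Af p) Ropp). apply cont_mult.
    + unfold Vf. apply cont_plus. apply cont_mult. apply cont_cos.
      apply (cont_comp cos sq). apply cont_cos. apply cont_sq.
      apply (cont_comp cos ash). apply cont_cos. apply cont_ash.
    + apply cont_Af.
    + apply cont_opp.
  - apply (cont_comp (fun p => p + sin p * cos p) Ropp).
    apply cont_plus. apply cont_id. apply cont_mult. apply cont_sin. apply cont_cos.
    apply cont_opp.
  - apply (cont_comp (fun p => 2 * Mint p) Ropp).
    apply cont_mult. apply continuous_const. apply (ex_derive_continuous Mint). eexists; apply is_derive_Mint.
    apply cont_opp.
Qed.

Definition V0 := PI / 2 * (sqrt 2 - 1 + ln (sqrt 2 + 1) - ln 2).

Lemma int_u : is_RInt u 0 (PI/2) V0.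
Proof.
  assert (H := FTC_int Ef u 0 (PI/2)).
  replace V0 with (Ef (PI/2) - Ef 0).
  apply H. pose proof PI_RGT_0; lra. apply cont_u. intros; apply cont_Ef. apply is_derive_Ef.
  unfold Ef, Vf, Af. rewrite cos_PI2, sin_PI2, cos_0, sin_0.
  assert (Mint (PI/2) = PI / 4 * ln 2) by (rewrite <- Mb1; reflexivity).
  assert (Mint 0 = 0) by (unfold Mint; apply (@RInt_point R_CompleteNormedModule)).
  rewrite H0, H1, ash0, !Rmult_1_l, asin_1.
  unfold sq, ash, V0. rewrite !Rmult_1_l.
  replace (1 + 1) with 2 by (change (@eq R (1+1) 2); field). rewrite (Rplus_comm 1 (sqrt 2)).
  match goal with |- ?a = ?b => change (@eq R a b) end.
  field.
Qed.

Theorem lemma6p0p1 :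
  is_RInt (F_integrand 0) 0 1
    (PI / 2 * (sqrt 2 - 1 + ln (sqrt 2 + 1) - ln 2))
  /\ F 0 = PI / 2 * (sqrt 2 - 1 + ln (sqrt 2 + 1) - ln 2).
Proof.
  fold V0.
  assert (Hex : ex_RInt (F_integrand 0) 0 1).
  { apply (@ex_RInt_continuous R_CompleteNormedModule). rewrite Rmin_left, Rmax_right by lra.
    intros; apply f_cont; auto. }
  pose proof PI_RGT_0 as Hpi.
  assert (Hc := is_RInt_comp (F_integrand 0) (fun p => cos p * cos p) (fun p => -(2 * cos p * sin p)) 0 (PI/2)).
  cbv beta in Hc. rewrite cos_0, cos_PI2, Rmult_1_l, Rmult_0_l in Hc.
  assert (H1 : is_RInt (fun y => scal (-(2 * cos y * sin y)) (F_integrand 0 (cos y * cos y))) 0 (PI/2) (RInt (F_integrand 0) 1 0)).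
  { apply Hc.
    - intros x _. apply f_cont. pose proof (COS_bound x). split; nra.
    - intros x _. split.
      + auto_derive. auto. change (@eq R (1 * - sin x * cos x + cos x * (1 * - sin x)) (- (2 * cos x * sin x))). field.
      + apply (cont_comp (fun y => 2 * cos y * sin y) Ropp). apply cont_mult. apply cont_mult.
        apply continuous_const. apply cont_cos. apply cont_sin. apply cont_opp. }
  assert (H2 : is_RInt (fun y => scal (-(2 * cos y * sin y)) (F_integrand 0 (cos y * cos y))) 0 (PI/2) (- V0)).
  { apply (is_RInt_ext (fun y => - u y)).
    - rewrite Rmin_left, Rmax_right by lra. intros y Hy.
      assert (Hcy : 0 < cos y) by (apply cos_gt_0; lra).
      rewrite fpos by nra. rewrite sqrt_square by lra. unfold u, sq, scal; simpl. unfold mult; simpl.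
      change (@eq R (- (2 * sin y * sqrt (1 + cos y * cos y) * asin (cos y * cos y)))
        (- (2 * cos y * sin y) * (sqrt (1 + cos y * cos y) * asin (cos y * cos y) / cos y))).
      field. lra.
    - apply (is_RInt_opp u). apply int_u. }
  assert (H3 : RInt (F_integrand 0) 1 0 = - V0).
  { rewrite <- (is_RInt_unique _ _ _ _ H1). apply (is_RInt_unique _ _ _ _ H2). }
  assert (H4 : RInt (F_integrand 0) 0 1 = V0).
  { rewrite <- opp_RInt_swap in H3 by exact Hex. unfold opp in H3; simpl in H3. lra. }
  split.
  - rewrite <- H4. apply (RInt_correct (F_integrand 0) 0 1 Hex).
  - unfold F. exact H4.
Qed.
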